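(* For every connected graph $F$ other than $P_2$ and $P_3$, we have $D_v(F)\ge (v(F)+1)/2$ and $W_v(F)\ge (v(F)-1)/2$.
   Context: Graphs are finite simple graphs; $v(F)$ is the number of vertices; $P_n$ is the path on $n$ vertices. We use first-order logic of graphs with relation symbols for adjacency and equality only; variable width of a sentence is the number of distinct variables it uses. $D_v(F)$ (resp. $W_v(F)$) is the minimum quantifier depth (resp. variable width) of a first-order sentence $\Phi$ for which there is an integer $k$ such that for every connected graph $G$ with at least $k$ vertices, $G\models\Phi$ if and only if $G$ contains a (not necessarily induced) subgraph isomorphic to $F$. *)

(* Defs.v *)
From mathcomp Require Import all_boot.
Set Implicit Arguments. Unset Strict Implicit. Unset Printing Implicit Defensive.

Record sgraph := SGraph {
  vert :> finType;
  adj : rel vert;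
  adj_sym : symmetric adj;
  adj_irrefl : irreflexive adj }.

Definition nverts (G : sgraph) : nat := #|vert G|.

Definition connected (G : sgraph) : Prop :=
  0 < #|vert G| /\ forall x y : vert G, connect (@adj G) x y.

Definition contains (G F : sgraph) : Prop :=
  exists f : vert F -> vert G, injective f /\
    forall x y : vert F, adj x y -> adj (f x) (f y).

Definition isomorphic (F H : sgraph) : Prop :=
  exists f : vert F -> vert H, bijective f /\
    forall x y : vert F, adj (f x) (f y) = adj x y.

Definition path_adj (n : nat) : rel 'I_n :=
  fun i j => (i.+1 == j :> nat) || (j.+1 == i :> nat).
Lemma path_adj_sym n : symmetric (@path_adj n).
Proof. by move=> i j; rewrite /path_adj orbC. Qed.
Lemma path_adj_irrefl n : irreflexive (@path_adj n).
Proof. by move=> i; rewrite /path_adj orbb; apply/negbTE; rewrite neq_ltn ltnSn orbT. Qed.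
Definition P (n : nat) : sgraph := SGraph (@path_adj_sym n) (@path_adj_irrefl n).

(** First-order formulas of graphs: relation symbols adjacency and equality
    only (no truth constants), variables indexed by nat. *)
Inductive form : Type :=
| FAdj : nat -> nat -> form
| FEq  : nat -> nat -> form
| FNot : form -> form
| FAnd : form -> form -> form
| FOr  : form -> form -> form
| FEx  : nat -> form -> form
| FAll : nat -> form -> form.

Fixpoint qdepth (f : form) : nat :=
  match f with
  | FAdj _ _ | FEq _ _ => 0
  | FNot g => qdepth g
  | FAnd g h | FOr g h => maxn (qdepth g) (qdepth h)
  | FEx _ g | FAll _ g => (qdepth g).+1
  end.

Fixpoint vars (f : form) : seq nat :=
  match f with
  | FAdj x y | FEq x y => [:: x; y]
  | FNot g => vars g
  | FAnd g h | FOr g h => vars g ++ vars h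
  | FEx x g | FAll x g => x :: vars g
  end.

Definition width (f : form) : nat := size (undup (vars f)).

Fixpoint fv (f : form) : seq nat :=
  match f with
  | FAdj x y | FEq x y => [:: x; y]
  | FNot g => fv g
  | FAnd g h | FOr g h => fv g ++ fv h
  | FEx x g | FAll x g => filter (fun y => y != x) (fv g)
  end.

Definition sentence (f : form) : Prop := fv f = [::].

Definition upd (G : sgraph) (e : nat -> vert G) (x : nat) (v : vert G) :=
  fun y => if y == x then v else e y.

Fixpoint holds (G : sgraph) (e : nat -> vert G) (f : form) : Prop :=
  match f with
  | FAdj x y => adj (e x) (e y)
  | FEq x y => e x = e y
  | FNot g => ~ holds e g
  | FAnd g h => holds e g /\ holds e h
  | FOr g h => holds e g \/ holds e h
  | FEx x g => exists v : vert G, holds (upd e x v) g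
  | FAll x g => forall v : vert G, holds (upd e x v) g
  end.

Definition models (G : sgraph) (f : form) : Prop :=
  forall e : nat -> vert G, holds e f.

Definition defines_sub_conn (F : sgraph) (phi : form) (k : nat) : Prop :=
  forall G : sgraph, connected G -> k <= nverts G ->
    (models G phi <-> contains G F).

(* Main.v *)
Require Import Defs.
From mathcomp Require Import all_boot zify.
Set Implicit Arguments. Unset Strict Implicit. Unset Printing Implicit Defensive.

Lemma size_undup_filter (P : pred nat) (V : seq nat) :
  size (undup [seq y <- V | P y]) <= size (undup V).
Proof. by rewrite -filter_undup size_filter count_size. Qed.

Lemma size_undup_cons x (V : seq nat) : size (undup (x :: V)) <= (size (undup V)).+1.
Proof. by rewrite /=; case: ifP => //= _; exact: leqnSn. Qed.

Lemma size_undup_cons_in x (V : seq nat) : x \in V -> size (undup (x :: V)) = size (undup V).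
Proof. by move=> /= ->. Qed.

Lemma size_undup_filter_in x (V : seq nat) : x \in V ->
  (size (undup [seq y <- V | y != x])).+1 <= size (undup V).
Proof.
move=> xV; rewrite -filter_undup size_filter.
rewrite -(count_predC (fun y => y != x) (undup V)).
have : 0 < count (predC (fun y => y != x)) (undup V).
  rewrite -has_count; apply/hasP; exists x; first by rewrite mem_undup.
  by rewrite /= eqxx.
move=> h; rewrite -addn1 leq_add2l //.
Qed.

Lemma fv_sub_vars f : {subset fv f <= vars f}.
Proof.
elim: f => [x z | x z | g IH | g IHg h IHh | g IHg h IHh | x g IH | x g IH] y //=.
- exact: IH.
- by rewrite !mem_cat => /orP[/IHg -> | /IHh ->]; rewrite ?orbT.
- by rewrite !mem_cat => /orP[/IHg -> | /IHh ->]; rewrite ?orbT.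
- by rewrite mem_filter inE => /andP[_ /IH] ->; rewrite orbT.
- by rewrite mem_filter inE => /andP[_ /IH] ->; rewrite orbT.
Qed.

Lemma holds_fv (G : sgraph) f : forall (e e' : nat -> G),
  (forall y, y \in fv f -> e y = e' y) -> (holds e f <-> holds e' f).
Proof.
elim: f => /=.
- by move=> x y e e' h; rewrite !h ?inE ?eqxx ?orbT.
- by move=> x y e e' h; rewrite !h ?inE ?eqxx ?orbT.
- by move=> g IH e e' h; rewrite (IH e e' h).
- move=> g IHg h IHh e e' hh.
  rewrite (IHg e e') ?(IHh e e') // => y yf; apply: hh; by rewrite mem_cat yf ?orbT.
- move=> g IHg h IHh e e' hh.
  rewrite (IHg e e') ?(IHh e e') // => y yf; apply: hh; by rewrite mem_cat yf ?orbT.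
- move=> x g IH e e' h; split=> -[v hv]; exists v.
  + apply/(IH (upd e x v)) => // y yf; rewrite /upd; case: eqP => // /eqP yx.
    by apply: h; rewrite mem_filter yx.
  + apply/(IH _ (upd e' x v)) => // y yf; rewrite /upd; case: eqP => // /eqP yx.
    by apply: h; rewrite mem_filter yx.
- move=> x g IH e e' h; split=> hv v.
  + apply/(IH (upd e x v)) => // y yf; rewrite /upd; case: eqP => // /eqP yx.
    by apply: h; rewrite mem_filter yx.
  + apply/(IH _ (upd e' x v)) => // y yf; rewrite /upd; case: eqP => // /eqP yx.
    by apply: h; rewrite mem_filter yx.
Qed.

Lemma maxn0E m n : maxn m n = 0 -> m = 0 /\ n = 0.
Proof. lia. Qed.

Lemma qdepth0_fv f : qdepth f = 0 -> fv f != [::].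
Proof.
elim: f => //= [g IHg h IHh | g IHg h IHh] /maxn0E [/IHg];
  by case: (fv g).
Qed.

Section Logic.
Variables (G H : sgraph) (p : nat).
Variable Good : seq nat -> (nat -> G) -> (nat -> H) -> Prop.
Definition Atomic (V : seq nat) (eG : nat -> G) (eH : nat -> H) :=
  forall y z, y \in V -> z \in V ->
    (eG y = eG z <-> eH y = eH z) /\ adj (eG y) (eG z) = adj (eH y) (eH z).
Hypothesis good_atomic : forall V eG eH, Good V eG eH -> Atomic V eG eH.
Hypothesis forth_good : forall V eG eH x, Good V eG eH ->
  size (undup [seq y <- V | y != x]) + 2 <= p ->
  forall g, exists h, Good (x :: V) (upd eG x g) (upd eH x h).
Hypothesis back_good : forall V eG eH x, Good V eG eH ->
  size (undup [seq y <- V | y != x]) + 2 <= p ->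
  forall h, exists g, Good (x :: V) (upd eG x g) (upd eH x h).
Hypothesis forth_at : forall V eG eH x, Good V eG eH ->
  size (undup [seq y <- V | y != x]) + 1 <= p ->
  forall g, exists h, Atomic (x :: V) (upd eG x g) (upd eH x h).
Hypothesis back_at : forall V eG eH x, Good V eG eH ->
  size (undup [seq y <- V | y != x]) + 1 <= p ->
  forall h, exists g, Atomic (x :: V) (upd eG x g) (upd eH x h).

Lemma atomic_holds f : forall V eG eH, qdepth f = 0 -> {subset fv f <= V} ->
  Atomic V eG eH -> (holds eG f <-> holds eH f).
Proof.
elim: f => //=.
- move=> x y V eG eH _ s A.
  have yV : y \in V by apply: s; rewrite !inE eqxx orbT.
  have xV : x \in V by apply: s; rewrite !inE eqxx.
  by have [_ ->] := A x y xV yV.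
- move=> x y V eG eH _ s A.
  have yV : y \in V by apply: s; rewrite !inE eqxx orbT.
  have xV : x \in V by apply: s; rewrite !inE eqxx.
  by have [-> _] := A x y xV yV.
- move=> g IH V eG eH q s A; have := IH V eG eH q s A; tauto.
- move=> g IHg h IHh V eG eH /maxn0E [qg qh] s A.
  rewrite (IHg V eG eH) ?(IHh V eG eH) // => y yf; apply: s; by rewrite mem_cat yf ?orbT.
- move=> g IHg h IHh V eG eH /maxn0E [qg qh] s A.
  rewrite (IHg V eG eH) ?(IHh V eG eH) // => y yf; apply: s; by rewrite mem_cat yf ?orbT.
Qed.

Lemma sub_cons_fv x g V : {subset fv (FEx x g) <= V} -> {subset fv g <= x :: V}.
Proof.
move=> s y yg; rewrite inE; case: eqP => //= /eqP yx; apply: s; by rewrite /= mem_filter yx.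
Qed.

Lemma depth_holds f : forall V eG eH, {subset fv f <= V} ->
  size (undup V) + qdepth f <= p -> Good V eG eH -> (holds eG f <-> holds eH f).
Proof.
elim: f.
- move=> x y V eG eH s _ Gd; apply: (atomic_holds (V := V)) => //; exact: good_atomic.
- move=> x y V eG eH s _ Gd; apply: (atomic_holds (V := V)) => //; exact: good_atomic.
- move=> g IH V eG eH s q Gd /=; have := IH V eG eH s q Gd; tauto.
- move=> g IHg h IHh V eG eH s q Gd /=.
  rewrite (IHg V eG eH) ?(IHh V eG eH) //.
  + by move=> y yf; apply: s; rewrite /= mem_cat yf orbT.
  + by apply: leq_trans q; rewrite leq_add2l leq_maxr.
  + by move=> y yf; apply: s; rewrite /= mem_cat yf.
  + by apply: leq_trans q; rewrite leq_add2l leq_maxl.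
- move=> g IHg h IHh V eG eH s q Gd /=.
  rewrite (IHg V eG eH) ?(IHh V eG eH) //.
  + by move=> y yf; apply: s; rewrite /= mem_cat yf orbT.
  + by apply: leq_trans q; rewrite leq_add2l leq_maxr.
  + by move=> y yf; apply: s; rewrite /= mem_cat yf.
  + by apply: leq_trans q; rewrite leq_add2l leq_maxl.
- move=> x g IH V eG eH s q Gd /=.
  have sg := sub_cons_fv s.
  have hU : size (undup [seq y <- V | y != x]) <= size (undup V) := size_undup_filter _ _.
  have hc := size_undup_cons x V.
  move: q => /= q.
  case: (posnP (qdepth g)) => qg.
  + have q1 : size (undup [seq y <- V | y != x]) + 1 <= p.
      by apply: leq_trans q; rewrite qg leq_add2r.
    split=> -[v hv].
    * have [h A] := forth_at Gd q1 v; exists h.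
      by apply/(atomic_holds (V := x :: V) qg sg A).
    * have [g' A] := back_at Gd q1 v; exists g'.
      by apply/(atomic_holds (V := x :: V) qg sg A).
  + have q2 : size (undup [seq y <- V | y != x]) + 2 <= p.
      apply: leq_trans q; apply: leq_add => //; by rewrite ltnS.
    have q3 : size (undup (x :: V)) + qdepth g <= p.
      apply: leq_trans q; rewrite addnS -addSn; exact: leq_add.
    split=> -[v hv].
    * have [h Gd'] := forth_good Gd q2 v; exists h.
      by apply/(IH _ _ _ sg q3 Gd').
    * have [g' Gd'] := back_good Gd q2 v; exists g'.
      by apply/(IH _ _ _ sg q3 Gd').
- move=> x g IH V eG eH s q Gd /=.
  have sg : {subset fv g <= x :: V} by apply: (@sub_cons_fv x g V).
  have hU : size (undup [seq y <- V | y != x]) <= size (undup V) := size_undup_filter _ _.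
  have hc := size_undup_cons x V.
  move: q => /= q.
  case: (posnP (qdepth g)) => qg.
  + have q1 : size (undup [seq y <- V | y != x]) + 1 <= p.
      by apply: leq_trans q; rewrite qg leq_add2r.
    split=> hv v.
    * have [g' A] := back_at Gd q1 v.
      by apply/(atomic_holds (V := x :: V) qg sg A).
    * have [h A] := forth_at Gd q1 v.
      by apply/(atomic_holds (V := x :: V) qg sg A).
  + have q2 : size (undup [seq y <- V | y != x]) + 2 <= p.
      apply: leq_trans q; apply: leq_add => //; by rewrite ltnS.
    have q3 : size (undup (x :: V)) + qdepth g <= p.
      apply: leq_trans q; rewrite addnS -addSn; exact: leq_add.
    split=> hv v.
    * have [g' Gd'] := back_good Gd q2 v.
      by apply/(IH _ _ _ sg q3 Gd').
    * have [h Gd'] := forth_good Gd q2 v.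
      by apply/(IH _ _ _ sg q3 Gd').
Qed.

Lemma width_holds f : forall V eG eH, {subset vars f <= V} ->
  (size (undup V)).+1 <= p -> Good V eG eH -> (holds eG f <-> holds eH f).
Proof.
elim: f.
- move=> x y V eG eH s _ Gd; apply: (atomic_holds (V := V)) => //; exact: good_atomic.
- move=> x y V eG eH s _ Gd; apply: (atomic_holds (V := V)) => //; exact: good_atomic.
- move=> g IH V eG eH s q Gd /=; have := IH V eG eH s q Gd; tauto.
- move=> g IHg h IHh V eG eH s q Gd /=.
  rewrite (IHg V eG eH) ?(IHh V eG eH) //.
  + by move=> y yf; apply: s; rewrite /= mem_cat yf orbT.
  + by move=> y yf; apply: s; rewrite /= mem_cat yf.
- move=> g IHg h IHh V eG eH s q Gd /=.
  rewrite (IHg V eG eH) ?(IHh V eG eH) //.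
  + by move=> y yf; apply: s; rewrite /= mem_cat yf orbT.
  + by move=> y yf; apply: s; rewrite /= mem_cat yf.
- move=> x g IH V eG eH s q Gd /=.
  have xV : x \in V by apply: s; rewrite mem_head.
  have sg : {subset vars g <= x :: V} by move=> y yg; rewrite inE s ?orbT //= inE yg orbT.
  have hU := size_undup_filter_in xV.
  have q2 : size (undup [seq y <- V | y != x]) + 2 <= p.
    by apply: leq_trans q; rewrite addn2.
  have q3 : (size (undup (x :: V))).+1 <= p by rewrite size_undup_cons_in.
  split=> -[v hv].
  + have [h Gd'] := forth_good Gd q2 v; exists h; by apply/(IH _ _ _ sg q3 Gd').
  + have [g' Gd'] := back_good Gd q2 v; exists g'; by apply/(IH _ _ _ sg q3 Gd').
- move=> x g IH V eG eH s q Gd /=.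
  have xV : x \in V by apply: s; rewrite mem_head.
  have sg : {subset vars g <= x :: V} by move=> y yg; rewrite inE s ?orbT //= inE yg orbT.
  have hU := size_undup_filter_in xV.
  have q2 : size (undup [seq y <- V | y != x]) + 2 <= p.
    by apply: leq_trans q; rewrite addn2.
  have q3 : (size (undup (x :: V))).+1 <= p by rewrite size_undup_cons_in.
  split=> hv v.
  + have [g' Gd'] := back_good Gd q2 v; by apply/(IH _ _ _ sg q3 Gd').
  + have [h Gd'] := forth_good Gd q2 v; by apply/(IH _ _ _ sg q3 Gd').
Qed.
End Logic.

Section BG.
Variables (K V : finType) (cls : V -> K) (clq : pred K) (T : rel K) (Ts : symmetric T).
Definition badj : rel V := fun a b =>
  if cls a == cls b then (a != b) && clq (cls a) else T (cls a) (cls b).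
Lemma badj_sym : symmetric badj.
Proof.
move=> a b; rewrite /badj eq_sym; case: eqP => [e|_]; last exact: Ts.
by rewrite eq_sym e.
Qed.
Lemma badj_irr : irreflexive badj.
Proof. by move=> a; rewrite /badj eqxx eqxx. Qed.
Definition bgraph : sgraph := SGraph badj_sym badj_irr.
End BG.

Section Ext.
Variables (K : finType) (clq : pred K) (T : rel K) (Ts : symmetric T).
Variables (V1 V2 : finType) (c1 : V1 -> K) (c2 : V2 -> K) (p : nat).

Definition rigid (V : finType) (c : V -> K) k :=
  (exists a, c a = k) /\ (forall a b, c a = k -> c b = k -> a = b).
Definition classOK (V : finType) (c : V -> K) k :=
  p <= #|[pred a | c a == k]| \/
  (p.-1 <= #|[pred a | c a == k]| /\
     exists z, c z != k /\ forall y, c y = k -> badj c clq T z y = clq k).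
Definition cond := forall k, (rigid c1 k /\ rigid c2 k) \/ (classOK c1 k /\ classOK c2 k).

Definition Good (W : seq nat) (eG : nat -> bgraph c1 clq Ts) (eH : nat -> bgraph c2 clq Ts) :=
  (forall y, y \in W -> c1 (eG y) = c2 (eH y)) /\
  (forall y z, y \in W -> z \in W -> (eG y = eG z <-> eH y = eH z)).

Lemma good_atomic W eG eH : Good W eG eH -> Atomic W eG eH.
Proof.
move=> [hc he] y z yW zW; split; first exact: he.
rewrite /= /badj (hc _ yW) (hc _ zW).
have -> : (eG y != eG z) = (eH y != eH z).
  by apply/idP/idP => /eqP ne; apply/eqP => e; apply: ne; apply/(he _ _ yW zW).
by [].
Qed.

Hypothesis hcond : cond.

Lemma card_map_undup (A : finType) (e : nat -> A) (U : seq nat) :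
  #|map e U| <= size (undup U).
Proof.
apply: (@leq_trans #|map e (undup U)|).
  apply: subset_leq_card; apply/subsetP => a /mapP[y yU ->].
  by apply/mapP; exists y; rewrite ?mem_undup.
by apply: leq_trans (card_size _) _; rewrite size_map.
Qed.

Lemma fresh_exists (eG : nat -> V1) (eH : nat -> V2) (U : seq nat) (g : V1) :
  (forall y, y \in U -> c1 (eG y) = c2 (eH y)) ->
  g \notin map eG U ->
  (rigid c1 (c1 g) /\ rigid c2 (c1 g) \/ #|map eH U| < #|[pred a | c2 a == c1 g]|) ->
  exists h, c2 h = c1 g /\ h \notin map eH U.
Proof.
move=> hc gn [[[_ u1] [[h0 h0k] u2]] | lt].
  exists h0; split=> //; apply/mapP => -[y yU e].
  move/negP: gn; apply; apply/mapP; exists y => //; apply: u1 => //.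
  by rewrite hc // -e.
case: (pickP [pred h | (c2 h == c1 g) && (h \notin map eH U)]) => [h /andP[/eqP hk hn] | none].
  by exists h.
have : [pred a | c2 a == c1 g] \subset mem (map eH U).
  apply/subsetP => a; rewrite inE => ak; move: (none a) => /=; rewrite ak /=.
  by move/negbFE.
by move/subset_leq_card; rewrite leqNgt lt.
Qed.

Lemma good_upd W (eG : nat -> bgraph c1 clq Ts) (eH : nat -> bgraph c2 clq Ts) x g h :
  Good W eG eH -> c1 g = c2 h ->
  (forall y, y \in W -> y != x -> (g = eG y <-> h = eH y)) ->
  Good (x :: W) (upd eG x g) (upd eH x h).
Proof.
move=> [hc he] ghk hgy; split.
  move=> y; rewrite inE /upd; case: eqP => //= _; exact: hc.
move=> y z; rewrite !inE /upd.
case: (eqVneq y x) => [-> | yx] /=; case: (eqVneq z x) => [-> | zx] //= yW zW.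
- exact: hgy.
- by split=> e; apply/esym/(hgy y yW yx)/esym.
- exact: he.
Qed.

Lemma forth_good W (eG : nat -> bgraph c1 clq Ts) (eH : nat -> bgraph c2 clq Ts) x :
  Good W eG eH -> size (undup [seq y <- W | y != x]) + 2 <= p ->
  forall g, exists h, Good (x :: W) (upd eG x g) (upd eH x h).
Proof.
move=> Gd hs g; have [hc he] := Gd.
set U := [seq y <- W | y != x] in hs.
have hcU : forall y, y \in U -> c1 (eG y) = c2 (eH y).
  by move=> y; rewrite mem_filter => /andP[_ /hc].
case: (boolP (g \in map eG U)) => [/mapP[y0 y0U ->] | gn].
  exists (eH y0); apply: good_upd => //; first exact: hcU.
  move=> y yW yx; apply: he => //; by move: y0U; rewrite mem_filter => /andP[].
have hm := card_map_undup eH U.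
have [h [hk hn]] : exists h, c2 h = c1 g /\ h \notin map eH U.
  apply: (fresh_exists hcU gn).
  case: (hcond (c1 g)) => [r | [_ ok2]]; first by left.
  right; case: ok2 => [c | [c _]]; apply: leq_trans c; move: hm hs; clear; case: p => [|q] /=; lia.
exists h; apply: good_upd => //.
move=> y yW yx; have yU : y \in U by rewrite mem_filter yx.
split=> e.
  by move/negP: gn; case; apply/mapP; exists y.
by move/negP: hn; case; apply/mapP; exists y.
Qed.

Lemma forth_at W (eG : nat -> bgraph c1 clq Ts) (eH : nat -> bgraph c2 clq Ts) x :
  Good W eG eH -> size (undup [seq y <- W | y != x]) + 1 <= p ->
  forall g, exists h, Atomic (x :: W) (upd eG x g) (upd eH x h).
Proof.
move=> Gd hs g; have [hc he] := Gd.
set U := [seq y <- W | y != x] in hs.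
have hcU : forall y, y \in U -> c1 (eG y) = c2 (eH y).
  by move=> y; rewrite mem_filter => /andP[_ /hc].
case: (boolP (g \in map eG U)) => [/mapP[y0 y0U ->] | gn].
  exists (eH y0); apply: good_atomic; apply: good_upd => //; first exact: hcU.
  move=> y yW yx; apply: he => //; by move: y0U; rewrite mem_filter => /andP[].
have hm := card_map_undup eH U.
case: (pickP [pred h | (c2 h == c1 g) && (h \notin map eH U)]) => [h /andP[/eqP hk hn] | none].
  exists h; apply: good_atomic; apply: good_upd => //.
  move=> y yW yx; have yU : y \in U by rewrite mem_filter yx.
  split=> e.
    by move/negP: gn; case; apply/mapP; exists y.
  by move/negP: hn; case; apply/mapP; exists y.
have sub : [pred a | c2 a == c1 g] \subset mem (map eH U).
  apply/subsetP => a; rewrite inE => ak; move: (none a) => /=; rewrite ak /=.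
  by move/negbFE.
have cle := subset_leq_card sub.
case: (hcond (c1 g)) => [[[_ u1] [[h0 h0k] u2]] | [_ ok2]].
  exfalso; move/subsetP: sub => /(_ h0); rewrite inE h0k eqxx => /(_ isT) /mapP[y yU e].
  move/negP: gn; apply; apply/mapP; exists y => //; apply: u1 => //.
  by rewrite hcU // -e.
case: ok2 => [c | [c [z [zk alt]]]].
  exfalso; have := leq_trans (leq_trans c cle) hm.
  by rewrite leqNgt (leq_trans _ hs) // addn1.
have ceq : #|[pred a | c2 a == c1 g]| = #|map eH U|.
  apply/eqP; rewrite eqn_leq cle /=; apply: leq_trans c; apply: leq_trans hm _.
  by move: hs; clear; case: p => [|q] /=; lia.
have eqS := (subset_cardP ceq) sub.
have hU : forall y, y \in U -> c2 (eH y) = c1 g.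
  move=> y yU; have : eH y \in map eH U by apply: map_f.
  by rewrite -eqS inE => /eqP.
have zn : z != eH x -> True by [].
exists z => y w; rewrite !inE /upd.
case: (eqVneq y x) => [-> | yx] /=; case: (eqVneq w x) => [-> | wx] //= yW wW.
- by rewrite !badj_irr.
- have wU : w \in U by rewrite mem_filter wx.
  have gw : g != eG w.
    by apply/eqP => e; move/negP: gn; apply; rewrite e; apply: map_f.
  have zw : z != eH w.
    by apply/eqP => e; move: zk; rewrite e hU // eqxx.
  split; first by split=> /eqP; rewrite ?(negbTE gw) ?(negbTE zw).
  rewrite /= alt; last exact: hU.
  by rewrite /badj hcU // hU // eqxx gw.
- have yU : y \in U by rewrite mem_filter yx.
  have gy : eG y != g.
    by apply/eqP => e; move/negP: gn; apply; rewrite -e; apply: map_f.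
  have zy : eH y != z.
    by apply/eqP => e; move: zk; rewrite -e hU // eqxx.
  split; first by split=> /eqP; rewrite ?(negbTE gy) ?(negbTE zy).
  rewrite /= (@badj_sym _ _ c2 clq T Ts (eH y) z) alt; last exact: hU.
  by rewrite /badj hcU // hU // eqxx gy.
- exact: (good_atomic Gd).
Qed.
End Ext.

Section Pair.
Variables (K : finType) (clq : pred K) (T : rel K) (Ts : symmetric T).
Variables (V1 V2 : finType) (c1 : V1 -> K) (c2 : V2 -> K) (p : nat).
Hypothesis hcond : cond clq T c1 c2 p.
Let G := bgraph c1 clq Ts.
Let H := bgraph c2 clq Ts.
Let GD := @Good K clq T Ts V1 V2 c1 c2.
Let GD' := @Good K clq T Ts V2 V1 c2 c1.

Lemma cond_sym : cond clq T c2 c1 p.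
Proof. move=> k; case: (hcond k) => [[a b]|[a b]]; [left|right]; by split. Qed.

Lemma good_sym W (eG : nat -> G) (eH : nat -> H) :
  GD W eG eH -> GD' W eH eG.
Proof.
move=> [hc he]; split=> [y yW|y z yW zW]; first by rewrite hc.
by have := he y z yW zW; tauto.
Qed.

Lemma good_sym' W (eG : nat -> G) (eH : nat -> H) :
  GD' W eH eG -> GD W eG eH.
Proof.
move=> [hc he]; split=> [y yW|y z yW zW]; first by rewrite hc.
by have := he y z yW zW; tauto.
Qed.

Lemma atomic_sym W (eG : nat -> G) (eH : nat -> H) :
  Atomic W eH eG -> Atomic W eG eH.
Proof.
move=> A y z yW zW; have [h1 h2] := A y z yW zW; split; first tauto.
by rewrite h2.
Qed.

Lemma pair_bound (F : sgraph) (phi : form) (k : nat) :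
  (exists a b, c1 a = c2 b) ->
  sentence phi -> defines_sub_conn F phi k ->
  connected G -> k <= nverts G -> contains G F ->
  connected H -> k <= nverts H -> ~ contains H F ->
  p < qdepth phi /\ p <= width phi.
Proof.
move=> [a [b hab]] sphi def cG kG inG cH kH notH.
have hG : models G phi by apply/(def G cG kG).
have final : forall eH : nat -> H, holds eH phi -> False.
  move=> eH h; apply: notH; apply/(def H cH kH) => e.
  by apply/(holds_fv (e := eH)) => // y; rewrite sphi.
have bg : forall W eG eH x, GD W eG eH ->
    size (undup [seq y <- W | y != x]) + 2 <= p ->
    forall h, exists g, GD (x :: W) (upd eG x g) (upd eH x h).
  move=> W eG eH x Gd hs h.
  have [g Gd'] := forth_good cond_sym (good_sym Gd) hs h.
  by exists g; apply: good_sym'.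
have ba : forall W eG eH x, GD W eG eH ->
    size (undup [seq y <- W | y != x]) + 1 <= p ->
    forall h, exists g, Atomic (x :: W) (upd eG x g) (upd eH x h).
  move=> W eG eH x Gd hs h.
  have [g A] := forth_at cond_sym (good_sym Gd) hs h.
  by exists g; apply: atomic_sym.
split.
  rewrite ltnNge; apply/negP => q.
  have := @depth_holds G H p GD (@good_atomic _ _ _ Ts _ _ c1 c2)
    (fun W eG eH x => @forth_good _ _ _ Ts _ _ c1 c2 p hcond W eG eH x) bg
    (fun W eG eH x => @forth_at _ _ _ Ts _ _ c1 c2 p hcond W eG eH x) ba
    phi [::] (fun _ => a) (fun _ => b).
  case.
  - by rewrite sphi.
  - by [].
  - by split.
  move=> h1 _; apply: (final (fun _ => b)); apply: h1; exact: hG.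
rewrite leqNgt; apply/negP => w.
have := @width_holds G H p GD (@good_atomic _ _ _ Ts _ _ c1 c2)
    (fun W eG eH x => @forth_good _ _ _ Ts _ _ c1 c2 p hcond W eG eH x) bg
    phi (vars phi) (fun _ => a) (fun _ => b).
case.
- by [].
- exact: w.
- by split.
move=> h1 _; apply: (final (fun _ => b)); apply: h1; exact: hG.
Qed.
End Pair.

Lemma conn_hub (G : sgraph) (h : G) : (forall z, connect (@adj G) z h) -> connected G.
Proof.
move=> hz; split; first by apply/card_gt0P; exists h.
move=> x y; apply: (connect_trans (hz x)).
by rewrite (sym_connect_sym (@adj_sym G)); apply: hz.
Qed.

Lemma card_inj_le (A V : finType) (P : pred V) (f : A -> V) :
  injective f -> (forall a, P (f a)) -> #|A| <= #|P|.
Proof.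
move=> fi fP; apply: (@leq_trans #|[set f a | a in [set: A]]|).
  by rewrite card_imset // cardsT.
apply: subset_leq_card; apply/subsetP => z /imsetP[a _ ->]; exact: fP.
Qed.

(* ---------- template A : clique + path ---------- *)
Definition clsA (m N : nat) (z : ('I_m + 'I_N)%type) : option 'I_N :=
  match z with inl _ => None | inr i => Some i end.
Definition clqO (X : finType) : pred (option X) := fun c => c == None.
Definition TA (N : nat) : rel (option 'I_N) := fun c d =>
  match c, d with
  | None, Some j => j == 0 :> nat
  | Some i, None => i == 0 :> nat
  | Some i, Some j => (i.+1 == j :> nat) || (j.+1 == i :> nat)
  | None, None => false
  end.
Lemma TA_sym N : symmetric (@TA N).
Proof. by case=> [i|] [j|] //=; rewrite orbC. Qed.
Definition GA m N : sgraph := bgraph (@clsA m N) (@clqO _) (@TA_sym N).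

(* ---------- template T1 : clique + hub + leaves ---------- *)
Definition clsT (m N : nat) (z : ('I_m + option 'I_N)%type) : option bool :=
  match z with inl _ => None | inr None => Some true | inr (Some _) => Some false end.
Definition TT : rel (option bool) := fun c d =>
  match c, d with
  | None, Some true | Some true, None | Some true, Some false | Some false, Some true => true
  | _, _ => false
  end.
Lemma TT_sym : symmetric TT.
Proof. by case=> [[]|] [[]|]. Qed.
Definition GT m N : sgraph := bgraph (@clsT m N) (@clqO _) TT_sym.

Lemma GA_conn m n : connected (GA m n.+1).
Proof.
apply: (@conn_hub (GA m n.+1) (inr ord0)) => -[j | [i hi]].
  by apply: connect1; rewrite /= /badj /= /TA.
elim: i hi => [|i IH] hi; first by rewrite (_ : Ordinal hi = ord0) //; apply: val_inj.
have hi' : i < n.+1 by apply: ltnW.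
apply: (connect_trans _ (IH hi')); apply: connect1.
rewrite /= /badj /= /TA /=.
have -> : (Some (Ordinal hi) == Some (Ordinal hi')) = false.
  by apply/eqP => -[] /eqP; rewrite -{2}(addn0 i) -addn1 eqn_add2l.
by rewrite eqxx orbT.
Qed.

Lemma GT_conn m n : connected (GT m n).
Proof.
apply: (@conn_hub (GT m n) (inr None)) => -[j | [i|]] //.
- by apply: connect1.
- by apply: connect1.
Qed.

Lemma GA_size m n : nverts (GA m n) = m + n.
Proof. by rewrite /nverts /= card_sum !card_ord. Qed.

Lemma GT_size m n : nverts (GT m n) = m + n.+1.
Proof. by rewrite /nverts /= card_sum card_option !card_ord. Qed.

Lemma GA_contains (F : sgraph) n : contains (GA #|F| n) F.
Proof.
exists (fun x => inl (enum_rank x)); split.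
  by move=> x y [] /enum_rank_inj.
move=> x y hxy; rewrite /= /badj /= andbT.
apply/eqP => -[] /enum_rank_inj e; by move: hxy; rewrite e (@adj_irrefl F).
Qed.

Lemma GT_contains (F : sgraph) n : contains (GT #|F| n) F.
Proof.
exists (fun x => inl (enum_rank x)); split.
  by move=> x y [] /enum_rank_inj.
move=> x y hxy; rewrite /= /badj /= andbT.
apply/eqP => -[] /enum_rank_inj e; by move: hxy; rewrite e (@adj_irrefl F).
Qed.

Section AdjA.
Variables m n : nat.
Lemma adjA_rr (i j : 'I_n) : adj (inr i : GA m n) (inr j) = (i.+1 == j :> nat) || (j.+1 == i :> nat).
Proof.
rewrite /= /badj /=; case: eqP => [[->]|] //=; rewrite andbF.
by apply/esym/negbTE; rewrite negb_or; apply/andP; split; apply/eqP; lia.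
Qed.
Lemma adjA_lr (i : 'I_m) (j : 'I_n) : adj (inl i : GA m n) (inr j) = (j == 0 :> nat).
Proof. by []. Qed.
Lemma adjA_rl (i : 'I_m) (j : 'I_n) : adj (inr j : GA m n) (inl i) = (j == 0 :> nat).
Proof. by []. Qed.
Lemma adjA_ll (i j : 'I_m) : adj (inl i : GA m n) (inl j) = (i != j).
Proof. by rewrite /= /badj /= andbT. Qed.
End AdjA.

Lemma GA_deg m n : 0 < m -> forall a : GA m n, #|[pred z | adj a z]| <= m.+1.
Proof.
move=> m0 a.
pose f := fun z : GA m n => match z with inl j => Some j | inr _ => None end.
have Hf : {in [pred z | adj a z] &, injective f} -> #|[pred z | adj a z]| <= m.+1.
  by move=> inj; have := leq_card_in f _ inj; rewrite card_option card_ord.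
case: a => [i | j] in Hf *.
- apply: Hf => -[z1|z1] [z2|z2]; rewrite !inE ?adjA_ll ?adjA_lr => h1 h2 //= e.
  + by case: e => ->.
  + by congr inr; apply: val_inj => /=; move/eqP: h1 => ->; move/eqP: h2 => ->.
case: (eqVneq (val j) 0) => j0.
- apply: Hf => -[z1|z1] [z2|z2]; rewrite !inE ?adjA_rl ?adjA_rr => h1 h2 //= e.
  + by case: e => ->.
  + congr inr; apply: val_inj; change (nat_of_ord z1 = nat_of_ord z2); move: h1 h2.
    have j0' : nat_of_ord j = 0 := j0; lia.
pose g := fun z : GA m n => match z with inl _ => false | inr j' => val j < val j' end.
have : {in [pred z | adj (inr j : GA m n) z] &, injective g}.
  move=> -[z1|z1] [z2|z2]; rewrite !inE ?adjA_rl ?adjA_rr ?(negbTE j0) //= => h1 h2 e.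
  congr inr; apply: val_inj; change (nat_of_ord z1 = nat_of_ord z2).
  move: h1 h2 e j0; rewrite /g; change (\val j) with (nat_of_ord j); case: ltnP; case: ltnP; lia.
move/(leq_card_in g); rewrite card_bool => h; apply: leq_trans h _; by rewrite ltnS.
Qed.

Lemma condA l p n : 0 < p -> p <= l ->
  cond (@clqO _) (@TA n.+1) (@clsA l n.+1) (@clsA p.-1 n.+1) p.
Proof.
move=> p0 pl [i|].
  left; split; (split; [by exists (inr i) | ]); move=> a b; case: a => a; case: b => b //=; congruence.
right; split.
  left; apply: leq_trans pl _.
  have := @card_inj_le _ _ [pred a : GA l n.+1 | clsA a == None] (@inl _ _) _ _.
  rewrite card_ord; apply => //; by move=> x y [].
right; split.
  have := @card_inj_le _ _ [pred a : GA p.-1 n.+1 | clsA a == None] (@inl _ _) _ _.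
  rewrite card_ord; apply => //; by move=> x y [].
exists (inr ord0); split => // -[y|y] //= _.
Qed.

Lemma condT l p n : 0 < p -> p <= l -> p <= n ->
  cond (@clqO _) TT (@clsT l n) (@clsT p.-1 n) p.
Proof.
move=> p0 pl pn [[]|].
- left; split; (split; [by exists (inr None) | ]);
    move=> a b; case: a => [a|[a|]]; case: b => [b|[b|]] //=.
- right; split; left; apply: leq_trans pn _.
  + have := @card_inj_le _ _ [pred a : GT l n | clsT a == Some false] (fun i => inr (Some i)) _ _.
    rewrite card_ord; apply => //; by move=> x y [].
  + have := @card_inj_le _ _ [pred a : GT p.-1 n | clsT a == Some false] (fun i => inr (Some i)) _ _.
    rewrite card_ord; apply => //; by move=> x y [].
right; split.
  left; apply: leq_trans pl _.
  have := @card_inj_le _ _ [pred a : GT l n | clsT a == None] (@inl _ _) _ _.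
  rewrite card_ord; apply => //; by move=> x y [].
right; split.
  have := @card_inj_le _ _ [pred a : GT p.-1 n | clsT a == None] (@inl _ _) _ _.
  rewrite card_ord; apply => //; by move=> x y [].
exists (inr None); split => // -[y|[y|]] //= _.
Qed.

Lemma has_neighbor (F : sgraph) : connected F -> 1 < #|F| -> forall x : F, exists y, adj x y.
Proof.
move=> [_ cF] c2 x.
have [y yx] : exists y : F, y != x.
  case: (pickP [pred y : F | y != x]) => [y /= yx | none]; first by exists y.
  exfalso; move: c2; rewrite ltnNge => /negP; apply.
  rewrite -(card1 x); apply: subset_leq_card; apply/subsetP => z _.
  by move: (none z) => /= /negbFE; rewrite inE.
move/connectP: (cF x y) => -[[|z s] /= pth e]; first by move: yx; rewrite e eqxx.
by exists z; case/andP: pth.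
Qed.

Lemma GT_leaf_nb m n (a b : GT m n) : clsT a = Some false -> adj a b -> b = inr None.
Proof.
case: a => [a|[a|]] //= _; case: b => [b|[b|]] //=.
by rewrite /badj /= andbF.
Qed.

Lemma deg_mono (F H : sgraph) (f : F -> H) : injective f ->
  (forall x y, adj x y -> adj (f x) (f y)) ->
  forall v, #|[pred y | adj v y]| <= #|[pred z | adj (f v) z]|.
Proof.
move=> fi fh v; apply: (@leq_trans #|[set f y | y in [pred y | adj v y]]|).
  by rewrite card_imset.
apply: subset_leq_card; apply/subsetP => z /imsetP[y hy ->]; rewrite inE; exact: fh.
Qed.

Lemma GT_embed (F : sgraph) m n (f : F -> GT m n) : injective f ->
  (forall x y, adj x y -> adj (f x) (f y)) -> connected F -> m.+1 < #|F| ->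
  exists v (X : {set F}), #|F| <= #|X| + m.+1 /\ v \notin X /\
    (forall x, x \in X -> adj x v) /\ (forall x z, x \in X -> adj x z -> z = v).
Proof.
move=> fi fh cF mF.
have c2 : 1 < #|F| by apply: leq_ltn_trans mF.
have nb := has_neighbor cF c2.
pose X := [set x | clsT (f x) == Some false].
have bound : #|F| <= #|X| + m.+1.
  rewrite -(cardsC X) leq_add2l.
  pose g := fun z : GT m n => match z with inl j => Some j | inr _ => None end.
  have : {in ~: X &, injective (fun x => g (f x))}.
    move=> x1 x2; rewrite !inE; case e1: (f x1) => [a1|[a1|]]; case e2: (f x2) => [a2|[a2|]] //= _ _.
    - by case=> e; apply: fi; rewrite e1 e2 e.
    - by move=> _; apply: fi; rewrite e1 e2.
  by move/(leq_card_in (fun x => g (f x))); rewrite card_option card_ord.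
have [x0 x0X] : exists x0, x0 \in X.
  case: (pickP (mem X)) => [x h|none]; first by exists x.
  exfalso; move: bound; rewrite (eq_card0 none); lia.
have [v hv] := nb x0.
have fv : f v = inr None.
  by apply: (GT_leaf_nb (a := f x0)); [move: x0X; rewrite inE => /eqP | exact: fh].
have uniq_nb : forall x z, x \in X -> adj x z -> z = v.
  move=> x z xX hz; apply: fi; rewrite fv; apply: (GT_leaf_nb (a := f x)).
    by move: xX; rewrite inE => /eqP.
  exact: fh.
exists v, X; split => //; split; first by rewrite inE fv.
split => // x xX; have [z hz] := nb x; by rewrite -(uniq_nb x z xX hz).
Qed.

Lemma iso_of_list (F : sgraph) (x0 : F) (s : seq F) : uniq s -> size s = #|F| ->
  (forall i j, i < size s -> j < size s ->
     adj (nth x0 s i) (nth x0 s j) = (i.+1 == j) || (j.+1 == i)) ->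
  isomorphic F (P (size s)).
Proof.
move=> us ss spec.
have Hall : forall x, x \in s.
  move=> x; apply/negPn/negP => xn.
  have : uniq (x :: s) by rewrite /= xn us.
  move/card_uniqP => /= c; have := max_card (mem (x :: s)).
  by rewrite c ss ltnn.
have idx : forall x : F, index x s < size s by move=> x; rewrite index_mem.
exists (fun x => Ordinal (idx x)); split.
  exists (fun i : 'I_(size s) => nth x0 s i).
    by move=> x /=; rewrite nth_index.
  by move=> i; apply: val_inj => /=; rewrite index_uniq.
move=> x y /=; rewrite /path_adj /=.
by rewrite -[in RHS](nth_index x0 (Hall x)) -[in RHS](nth_index x0 (Hall y)) spec.
Qed.

Lemma half_facts l : l = odd l + (l./2) * 2.
Proof. by rewrite muln2 odd_double_half. Qed.

Lemma GT_notcont_big (F : sgraph) n : connected F -> 3 < #|F| ->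
  (forall v : F, #|[pred y | adj v y]| <= #|F|./2) -> ~ contains (GT (#|F|./2).-1 n) F.
Proof.
move=> cF l4 deg [f [fi fh]].
set p := #|F|./2 in deg f fi fh.
have hl := half_facts #|F|; rewrite -/p in hl.
have p2 : 1 < p by move: hl l4; case: (odd _) => /=; lia.
have [v [X [bnd [vX [adjX leafX]]]]] := GT_embed fi fh cF (ltac:(move: hl l4 p2; case: (odd _) => /=; lia)).
have Xsub : X \subset [pred y | adj v y].
  by apply/subsetP => x xX; rewrite inE adj_sym adjX.
have cX := subset_leq_card Xsub.
have dv := deg v.
have pe : p.-1.+1 = p by lia.
rewrite pe in bnd.
have ceq : #|X| = #|[pred y | adj v y]|.
  by apply/eqP; rewrite eqn_leq cX /=; move: hl bnd dv; case: (odd _) => /=; lia.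
have NX := (subset_cardP ceq) Xsub.
pose S := [pred z | (z == v) || (z \in X)].
have clS : closed (@adj F) S.
  have step : forall a b, adj a b -> a \in S -> b \in S.
    move=> a b hab; rewrite !inE => /orP[/eqP ea | aX].
      by rewrite NX inE -ea hab orbT.
    by rewrite (leafX a b aX hab) eqxx.
  move=> a b hab; apply/idP/idP; first exact: step.
  by apply: step; rewrite adj_sym.
have allS : forall z, z \in S.
  move=> z; rewrite -(closed_connect clS (cF.2 v z)); by rewrite inE eqxx.
have : #|F| <= #|S|.
  apply: subset_leq_card; apply/subsetP => z _; exact: allS.
have cS : #|S| <= 1 + #|X|.
  rewrite -(card1 v) -cardUI; exact: leq_addr.
move=> h; move: hl h cS dv cX; case: (odd _) => /=; lia.
Qed.

Lemma GT_notcont_small (F : sgraph) n : connected F -> 1 < #|F| -> #|F| <= 3 ->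
  ~ isomorphic F (P 2) -> ~ isomorphic F (P 3) -> ~ contains (GT 0 n) F.
Proof.
move=> cF l2 l3 nP2 nP3 [f [fi fh]].
have [v [X [bnd [vX [adjX leafX]]]]] := GT_embed fi fh cF l2.
have nadjX : forall a b, a \in X -> b \in X -> ~~ adj a b.
  move=> a b aX bX; apply/negP => hab; have := leafX a b aX hab.
  by move=> e; move: bX; rewrite e (negbTE vX).
have vnX : forall a, a \in X -> a != v by move=> a aX; apply/eqP => e; move: vX; rewrite -e aX.
case: (leqP #|F| 2) => l.
- have [a aX] : exists a, a \in X.
    case: (pickP (mem X)) => [x h|none]; first by exists x.
    exfalso; move: bnd; rewrite (eq_card0 none); lia.
  apply: nP2; apply: (@iso_of_list F v [:: v; a]).
  + by rewrite /= inE eq_sym vnX.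
  + by apply/eqP; rewrite eqn_leq l2 l.
  + move=> [|[|i]] [|[|j]] //= _ _; rewrite ?adj_irrefl //.
    * by rewrite adj_sym adjX.
    * by rewrite adjX.
- have c2 : 1 < #|X| by lia.
  have [a [b [aX bX ab]]] : exists a b, [/\ a \in X, b \in X & a != b].
    by move/card_gt1P: c2 => [a [b [aX bX ab]]]; exists a, b.
  apply: nP3; apply: (@iso_of_list F v [:: a; v; b]).
  + by rewrite /= !inE negb_or ab vnX /= ?andbT 1?eq_sym ?vnX.
  + by apply/eqP; rewrite eqn_leq l l3.
  + move=> [|[|[|i]]] [|[|[|j]]] //= _ _; rewrite ?adj_irrefl //.
    * by rewrite adjX.
    * by rewrite (negbTE (nadjX a b aX bX)).
    * by rewrite adj_sym adjX.
    * by rewrite adj_sym adjX.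
    * by rewrite (negbTE (nadjX b a bX aX)).
    * by rewrite adjX.
Qed.

Theorem theorem5 (F : sgraph) :
  connected F -> ~ isomorphic F (P 2) -> ~ isomorphic F (P 3) ->
  forall (phi : form) (k : nat), sentence phi -> defines_sub_conn F phi k ->
    nverts F + 1 <= 2 * qdepth phi /\ nverts F <= 2 * width phi + 1.
Proof.
move=> cF nP2 nP3 phi k sphi def.
have l0 : 0 < #|F| := cF.1.
rewrite /nverts.
case: (leqP #|F| 1) => l1.
  have -> : #|F| = 1 by lia.
  split; last by lia.
  case: (posnP (qdepth phi)) => q; last by lia.
  by move: (qdepth0_fv q); rewrite sphi.
set p := #|F|./2.
have hl := half_facts #|F|; rewrite -/p in hl.
have p0 : 0 < p by move: hl l1; case: (odd _) => /=; lia.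
have pl : p <= #|F| by move: hl; case: (odd _) => /=; lia.
suff [hq hw] : p < qdepth phi /\ p <= width phi.
  by move: hl hq hw; case: (odd _) => /=; lia.
case: (boolP ((3 < #|F|) && [exists v : F, p < #|[pred y | adj v y]|])).
  case/andP => l4 /existsP[v hv].
  have p2 : 1 < p by move: hl l4; case: (odd _) => /=; lia.
  pose n := k + #|F|.
  refine (@pair_bound _ (@clqO _) (@TA n.+1) (@TA_sym n.+1) _ _ (@clsA #|F| n.+1) (@clsA p.-1 n.+1) p (@condA #|F| p n p0 pl) F phi k _ _ _ _ _ _ _ _ _).
  - by exists (inr ord0), (inr ord0).
  - by [].
  - by [].
  - exact: GA_conn.
  - by rewrite GA_size; lia.
  - exact: GA_contains.
  - exact: GA_conn.
  - by rewrite GA_size; lia.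
  move=> [f [fi fh]].
  have := deg_mono fi fh v.
  have := @GA_deg p.-1 n.+1 (ltac:(lia)) (f v).
  move=> h1 h2; move: (leq_trans h2 h1) hv; lia.
move=> hcase.
pose n := k + #|F|.
apply: (@pair_bound _ (@clqO _) TT TT_sym _ _ (@clsT #|F| n) (@clsT p.-1 n) p (@condT #|F| p n p0 pl (ltac:(rewrite /n; lia))) F phi k).
- by exists (inr None), (inr None).
- by [].
- by [].
- exact: GT_conn.
- by rewrite GT_size; lia.
- exact: GT_contains.
- exact: GT_conn.
- by rewrite GT_size; lia.
case: (leqP #|F| 3) => l3.
  have -> : p.-1 = 0 by move: hl l3; case: (odd _) => /=; lia.
  by apply: GT_notcont_small.
apply: GT_notcont_big => // v; rewrite leqNgt; apply/negP => hv.
by move: hcase; rewrite l3 /=; apply/negP/negPn; apply/existsP; exists v.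
Qed.
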